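(* Let $(M,g)$ be a Lorentzian manifold of dimension $m\ge 3$ which is $k$ Osserman for some $1\le k\le m-1$. Then $(M,g)$ has constant sectional curvature.
   Context: Let $R$ be the curvature tensor of the Levi-Civita connection of $(M,g)$, viewed as a $4$-tensor, and for $x\in T_PM$ let $\mathcal{J}_R(x)$ be the Jacobi operator defined by $g(\mathcal{J}_R(x)y,w)=R(y,x,x,w)$. For a non-degenerate $k$-dimensional subspace $\sigma\subset T_PM$ with orthonormal basis $\{e_1,\dots,e_k\}$, $\mathcal{J}_R(\sigma)=\sum_{i=1}^k g(e_i,e_i)\mathcal{J}_R(e_i)$. $(M,g)$ is $k$ Osserman if the eigenvalues of $\mathcal{J}_R(\sigma)$ are constant on the Grassmannian of non-degenerate $k$-planes in $TM$. *)

(* Defs.v *)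
(* Pointwise model of a Lorentzian manifold. *)
From HB Require Import structures.
From mathcomp Require Import all_boot all_order all_algebra.
From mathcomp Require Import complex reals.
Set Implicit Arguments. Unset Strict Implicit. Unset Printing Implicit Defensive.
Import Order.TTheory GRing.Theory Num.Theory.
Local Open Scope ring_scope.

Section Defs.
Variables (R : realType) (m : nat).

Definition minkowski : 'M[R]_m :=
  \matrix_(i, j) (if i == j then (if val i == 0%N then -1 else 1) else 0).

Definition gmet (u v : 'rV[R]_m) : R := (u *m minkowski *m v^T) ord0 ord0.

Definition tensor4 := 'I_m -> 'I_m -> 'I_m -> 'I_m -> R.

Definition eval4 (Rc : tensor4) (x y z w : 'rV[R]_m) : R :=
  \sum_i \sum_j \sum_k \sum_l x 0 i * y 0 j * z 0 k * w 0 l * Rc i j k l.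

Definition alg_curv (Rc : tensor4) : Prop :=
  [/\ forall i j k l, Rc i j k l = - Rc j i k l,
      forall i j k l, Rc i j k l = - Rc i j l k,
      forall i j k l, Rc i j k l = Rc k l i j
    & forall i j k l, Rc i j k l + Rc j k i l + Rc k i j l = 0].

(* Jacobi operator J(x), acting on row vectors y |-> y *m J(x), characterized by
   g(J(x) y, w) = R(y,x,x,w); explicitly J(x) = B(x) * eta^{-1}, eta^{-1}=eta. *)
Definition jacobi (Rc : tensor4) (x : 'rV[R]_m) : 'M[R]_m :=
  (\matrix_(i, l) eval4 Rc (delta_mx 0 i) x x (delta_mx 0 l)) *m minkowski.

(* Rows of E form an orthonormal basis of a non-degenerate k-plane. *)
Definition orthonormal_frame (k : nat) (E : 'M[R]_(k, m)) : Prop :=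
  let G := E *m minkowski *m E^T in
  (forall i j, i != j -> G i j = 0) /\ (forall i, G i i = 1 \/ G i i = -1).

Definition jacobi_plane (Rc : tensor4) (k : nat) (E : 'M[R]_(k, m)) : 'M[R]_m :=
  \sum_(i < k) gmet (row i E) (row i E) *: jacobi Rc (row i E).

Definition eigenvalueC (A : 'M[R]_m) (z : R[i]) : bool :=
  root (map_poly (fun x : R => (x%:C)%C) (char_poly A)) z.

Definition k_osserman (M : Type) (Rm : M -> tensor4) (k : nat) : Prop :=
  forall (P Q : M) (E F : 'M[R]_(k, m)),
    orthonormal_frame E -> orthonormal_frame F ->
    forall z : R[i], eigenvalueC (jacobi_plane (Rm P) E) z =
                     eigenvalueC (jacobi_plane (Rm Q) F) z.

Definition plane_det (x y : 'rV[R]_m) : R :=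
  gmet x x * gmet y y - gmet x y ^+ 2.

Definition sectional_curvature (Rc : tensor4) (x y : 'rV[R]_m) : R :=
  eval4 Rc x y y x / plane_det x y.

Definition constant_sectional_curvature (M : Type) (Rm : M -> tensor4) : Prop :=
  exists c : R, forall (P : M) (x y : 'rV[R]_m),
    plane_det x y != 0 -> sectional_curvature (Rm P) x y = c.

End Defs.

(* Submission.v *)
Require Import Defs.
From HB Require Import structures.
From mathcomp Require Import all_boot all_order all_algebra.
From mathcomp Require Import complex reals.
From mathcomp Require Import ring lra zify.
From Stdlib Require Import Classical.
Import Order.TTheory GRing.Theory Num.Theory.
Local Open Scope ring_scope.

Module SubmissionAux.
Set Implicit Arguments. Unset Strict Implicit. Unset Printing Implicit Defensive.

Section Basics.
Variables (R : realType) (m : nat).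
Local Notation eta := (minkowski R m).
Local Notation dl i := (delta_mx 0 i : 'rV[R]_m).
Implicit Types (u v w x y z : 'rV[R]_m) (T : tensor4 R m).

Definition epsm (i : 'I_m) : R := if val i == 0%N then -1 else 1.
Lemma eps2 i : epsm i * epsm i = 1.
Proof. by rewrite /epsm; case: ifP => _; rewrite ?mulrNN mulr1. Qed.

Lemma etaE i j : eta i j = if i == j then epsm i else 0.
Proof. by rewrite /minkowski mxE. Qed.

Lemma dlE (a : 'I_m) j : (dl a) 0 j = (a == j)%:R.
Proof. by rewrite mxE eqxx eq_sym. Qed.

Lemma sum_dl (a : 'I_m) (F : 'I_m -> R) : \sum_j (dl a) 0 j * F j = F a.
Proof.
rewrite (bigD1 a) //= big1 ?addr0; first by rewrite dlE eqxx mul1r.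
by move=> j /negPf ja; rewrite dlE eq_sym ja mul0r.
Qed.

Lemma sum_dlr (a : 'I_m) (F : 'I_m -> R) : \sum_j F j * (dl a) 0 j = F a.
Proof. by rewrite -(sum_dl a F); apply eq_bigr => j _; rewrite mulrC. Qed.

Lemma mul_eta (u : 'rV[R]_m) j : (u *m eta) 0 j = u 0 j * epsm j.
Proof.
rewrite mxE (bigD1 j) //= big1 ?addr0; first by rewrite etaE eqxx.
by move=> i /negPf ij; rewrite etaE ij mulr0.
Qed.

Lemma gmetE u v : gmet u v = \sum_i u 0 i * epsm i * v 0 i.
Proof.
by rewrite /gmet mxE; apply eq_bigr => j _; rewrite mul_eta mxE.
Qed.

Lemma gmetC u v : gmet u v = gmet v u.
Proof. by rewrite !gmetE; apply eq_bigr => i _; ring. Qed.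

Lemma gmetDl u u' v : gmet (u + u') v = gmet u v + gmet u' v.
Proof. by rewrite !gmetE -big_split /=; apply eq_bigr => i _; rewrite mxE; ring. Qed.

Lemma gmetZl a u v : gmet (a *: u) v = a * gmet u v.
Proof. by rewrite !gmetE mulr_sumr; apply eq_bigr => i _; rewrite mxE; ring. Qed.

Lemma gmetDr u v v' : gmet u (v + v') = gmet u v + gmet u v'.
Proof. by rewrite gmetC gmetDl !(gmetC u). Qed.

Lemma gmetZr a u v : gmet u (a *: v) = a * gmet u v.
Proof. by rewrite gmetC gmetZl gmetC. Qed.

Lemma gmet_dl (a b : 'I_m) : gmet (dl a) (dl b) = if a == b then epsm a else 0.
Proof.
rewrite gmetE (bigD1 a) //= big1 ?addr0.
  rewrite !dlE eqxx mul1r; have [->|nab] := eqVneq a b; first by rewrite mulr1.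
  by rewrite mulr0.
by move=> i /negPf ai; rewrite dlE eq_sym ai !mul0r.
Qed.

Lemma eval4D1 T x x' y z w :
  eval4 T (x + x') y z w = eval4 T x y z w + eval4 T x' y z w.
Proof.
rewrite /eval4 -big_split /=; apply eq_bigr => i _.
rewrite -big_split /=; apply eq_bigr => j _.
rewrite -big_split /=; apply eq_bigr => k _.
rewrite -big_split /=; apply eq_bigr => l _.
rewrite mxE; ring.
Qed.
Lemma eval4Z1 T a x y z w : eval4 T (a *: x) y z w = a * eval4 T x y z w.
Proof.
rewrite /eval4 mulr_sumr; apply eq_bigr => i _.
rewrite mulr_sumr; apply eq_bigr => j _.
rewrite mulr_sumr; apply eq_bigr => k _.
rewrite mulr_sumr; apply eq_bigr => l _.
rewrite mxE; ring.
Qed.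
Lemma eval4D2 T x y y' z w :
  eval4 T x (y + y') z w = eval4 T x y z w + eval4 T x y' z w.
Proof.
rewrite /eval4 -big_split /=; apply eq_bigr => i _.
rewrite -big_split /=; apply eq_bigr => j _.
rewrite -big_split /=; apply eq_bigr => k _.
rewrite -big_split /=; apply eq_bigr => l _.
rewrite mxE; ring.
Qed.
Lemma eval4Z2 T a x y z w : eval4 T x (a *: y) z w = a * eval4 T x y z w.
Proof.
rewrite /eval4 mulr_sumr; apply eq_bigr => i _.
rewrite mulr_sumr; apply eq_bigr => j _.
rewrite mulr_sumr; apply eq_bigr => k _.
rewrite mulr_sumr; apply eq_bigr => l _.
rewrite mxE; ring.
Qed.
Lemma eval4D3 T x y z z' w :
  eval4 T x y (z + z') w = eval4 T x y z w + eval4 T x y z' w.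
Proof.
rewrite /eval4 -big_split /=; apply eq_bigr => i _.
rewrite -big_split /=; apply eq_bigr => j _.
rewrite -big_split /=; apply eq_bigr => k _.
rewrite -big_split /=; apply eq_bigr => l _.
rewrite mxE; ring.
Qed.
Lemma eval4Z3 T a x y z w : eval4 T x y (a *: z) w = a * eval4 T x y z w.
Proof.
rewrite /eval4 mulr_sumr; apply eq_bigr => i _.
rewrite mulr_sumr; apply eq_bigr => j _.
rewrite mulr_sumr; apply eq_bigr => k _.
rewrite mulr_sumr; apply eq_bigr => l _.
rewrite mxE; ring.
Qed.
Lemma eval4D4 T x y z w w' :
  eval4 T x y z (w + w') = eval4 T x y z w + eval4 T x y z w'.
Proof.
rewrite /eval4 -big_split /=; apply eq_bigr => i _.
rewrite -big_split /=; apply eq_bigr => j _.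
rewrite -big_split /=; apply eq_bigr => k _.
rewrite -big_split /=; apply eq_bigr => l _.
rewrite mxE; ring.
Qed.
Lemma eval4Z4 T a x y z w : eval4 T x y z (a *: w) = a * eval4 T x y z w.
Proof.
rewrite /eval4 mulr_sumr; apply eq_bigr => i _.
rewrite mulr_sumr; apply eq_bigr => j _.
rewrite mulr_sumr; apply eq_bigr => k _.
rewrite mulr_sumr; apply eq_bigr => l _.
rewrite mxE; ring.
Qed.

Lemma eval4_nested T x y z w : eval4 T x y z w =
  \sum_i x 0 i * (\sum_j y 0 j * (\sum_k z 0 k * (\sum_l w 0 l * T i j k l))).
Proof.
rewrite /eval4; apply eq_bigr => i _; rewrite mulr_sumr; apply eq_bigr => j _.
rewrite mulrA mulr_sumr; apply eq_bigr => k _.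
rewrite mulrA mulr_sumr; apply eq_bigr => l _.
by rewrite !mulrA.
Qed.

Lemma eval4_dl T (a b c d : 'I_m) : eval4 T (dl a) (dl b) (dl c) (dl d) = T a b c d.
Proof. by rewrite eval4_nested !sum_dl. Qed.

Lemma eval4_exp1 T x y z w :
  eval4 T x y z w = \sum_i x 0 i * eval4 T (dl i) y z w.
Proof. by rewrite eval4_nested; apply eq_bigr => i _; rewrite eval4_nested sum_dl. Qed.

Lemma swap22 (F : 'I_m -> 'I_m -> 'I_m -> 'I_m -> R) :
  \sum_i \sum_j \sum_k \sum_l F i j k l = \sum_k \sum_l \sum_i \sum_j F i j k l.
Proof.
under eq_bigr => i _ do rewrite exchange_big.
under eq_bigr => i _ do under eq_bigr => k _ do rewrite exchange_big.
rewrite exchange_big.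
by under eq_bigr => k _ do rewrite exchange_big.
Qed.

Lemma eval4_antisym12 T x y z w : alg_curv T ->
  eval4 T x y z w = - eval4 T y x z w.
Proof.
case=> A1 _ _ _; rewrite /eval4 [in RHS]exchange_big -sumrN.
apply eq_bigr => i _; rewrite -sumrN; apply eq_bigr => j _.
rewrite -sumrN; apply eq_bigr => k _; rewrite -sumrN; apply eq_bigr => l _.
rewrite (A1 i j); ring.
Qed.

Lemma eval4_antisym34 T x y z w : alg_curv T ->
  eval4 T x y z w = - eval4 T x y w z.
Proof.
case=> _ A2 _ _; rewrite /eval4 -sumrN.
apply eq_bigr => i _; rewrite -sumrN; apply eq_bigr => j _.
rewrite exchange_big -sumrN; apply eq_bigr => k _; rewrite -sumrN; apply eq_bigr => l _.
rewrite (A2 i j k l); ring.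
Qed.

Lemma eval4_pair T x y z w : alg_curv T ->
  eval4 T x y z w = eval4 T z w x y.
Proof.
case=> _ _ A3 _; rewrite /eval4 [in RHS]swap22.
apply eq_bigr => i _; apply eq_bigr => j _.
apply eq_bigr => k _; apply eq_bigr => l _.
rewrite (A3 i j k l); ring.
Qed.

End Basics.

Section Bound.
Variables (R : realType) (n : nat).
Local Notation C := R[i].

Lemma eig_sq (A : 'M[C]_n.+1) w : eigenvalue (A *m A) w ->
  exists2 z, eigenvalue A z & z ^+ 2 = w.
Proof.
move/eigenvalueP=> [v Hv vnz].
pose z := sqrtC w.
have hz : z ^+ 2 = w by exact: sqrtCK.
have key : (A - z%:M) *m (A + z%:M) = A *m A - w%:M.
  rewrite mulmxBl !mulmxDr mul_mx_scalar mul_scalar_mx -scalar_mxM -expr2 hz.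
  by rewrite opprD addrA addrK.
set u := v *m (A - z%:M).
have Hu : u *m (A + z%:M) = 0.
  by rewrite /u -mulmxA key mulmxBr Hv mul_mx_scalar subrr.
have [u0|unz] := eqVneq u 0.
  exists z => //; apply/eigenvalueP; exists v => //.
  by apply/eqP; rewrite -subr_eq0 -mul_mx_scalar -mulmxBr -/u u0.
exists (- z); last by rewrite sqrrN.
apply/eigenvalueP; exists u => //.
move: Hu; rewrite mulmxDr mul_mx_scalar => /eqP; rewrite addr_eq0 => /eqP ->.
by rewrite scaleNr.
Qed.

Lemma sqnorm_le_sum (s : seq C) z : z \in s -> `|z| ^+ 2 <= \sum_(y <- s) `|y| ^+ 2.
Proof.
elim: s => [//|a s IH]; rewrite inE big_cons => /orP[/eqP->|zs].
  by rewrite lerDl sumr_ge0 // => y _; rewrite exprn_ge0.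
by rewrite (le_trans (IH zs)) // lerDr exprn_ge0.
Qed.

Lemma sum_const_le (s : seq C) (F : C -> C) B : (forall y, y \in s -> F y <= B) ->
  \sum_(y <- s) F y <= B *+ size s.
Proof.
elim: s => [|a s IH] H; first by rewrite big_nil.
rewrite big_cons /= mulrS lerD ?H ?mem_head // IH // => y ys.
by rewrite H // inE ys orbT.
Qed.

Lemma tr_sq_bound (p0 : {poly C}) : p0 != 0 -> exists b : R,
  forall A : 'M[R]_n.+1,
  (forall z, root (char_poly (map_mx (real_complex R) A)) z -> root p0 z) ->
  `|\tr (A *m A)| <= b.
Proof.
move=> p0nz; have [rs0 Hrs0] := closed_field_poly_normal p0.
pose B := \sum_(y <- rs0) `|y| ^+ 2.
exists (complex.Re (B *+ n.+1)) => A HA.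
set Ac := map_mx (real_complex R) A.
have [rs Hrs] := closed_field_poly_normal (char_poly (Ac *m Ac)).
move: Hrs; rewrite (monicP (char_poly_monic _)) scale1r => Hrs.
have szrs : size rs = n.+1.
  by have := size_char_poly (Ac *m Ac); rewrite Hrs size_prod_XsubC => -[].
have trE : \tr (Ac *m Ac) = \sum_(w <- rs) w.
  have := char_poly_trace (Ac *m Ac) (ltn0Sn n).
  rewrite Hrs -{1}szrs coefPn_prod_XsubC ?szrs // => /eqP.
  by rewrite eqr_opp => /eqP <-.
have trC : \tr (Ac *m Ac) = (\tr (A *m A))%:C%C.
  by rewrite /Ac -map_mxM trace_map_mx.
have Hw : forall w, w \in rs -> `|w| <= B.
  move=> w wrs.
  have : root (char_poly (Ac *m Ac)) w by rewrite Hrs root_prod_XsubC.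
  rewrite -eigenvalue_root_char => /eig_sq [z zA <-].
  have : root p0 z by apply: HA; rewrite -eigenvalue_root_char.
  rewrite Hrs0 rootZ ?lead_coef_eq0 // root_prod_XsubC => zrs0.
  by rewrite normrX; apply: sqnorm_le_sum.
have H1 : `|\tr (Ac *m Ac)| <= B *+ n.+1.
  rewrite trE -szrs (le_trans (ler_norm_sum _ _ _)) //.
  exact: sum_const_le.
have H2 := normc_ge_Re ((\tr (A *m A))%:C%C).
rewrite trC in H1; have := le_trans H2 H1.
by rewrite lecE => /andP[_].
Qed.

End Bound.

Section Gen.
Variables (R : realType) (m : nat).
Local Notation eta := (minkowski R m).
Local Notation dl i := (delta_mx 0 i : 'rV[R]_m).
Implicit Types (u v w x y z : 'rV[R]_m) (T : tensor4 R m).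
Local Notation eps := (@epsm R m).

Lemma mulmx_eta p (M : 'M[R]_(p, m)) i j : (M *m eta) i j = M i j * eps j.
Proof.
rewrite mxE (bigD1 j) //= big1 ?addr0; first by rewrite etaE eqxx.
by move=> a /negPf aj; rewrite etaE aj mulr0.
Qed.

Lemma eta2 : eta *m eta = 1%:M.
Proof.
apply/matrixP=> i j; rewrite mulmx_eta etaE !mxE.
by case: eqP => [->|_]; rewrite ?eps2 ?mul0r.
Qed.

Lemma gram_entry p (E : 'M[R]_(p, m)) r r' :
  (E *m eta *m E^T) r r' = gmet (row r E) (row r' E).
Proof.
rewrite /gmet !mxE; apply eq_bigr => j _; rewrite !mxE; congr (_ * _).
by apply eq_bigr => i _; rewrite !mxE.
Qed.

Lemma jacobiE T x i l : jacobi T x i l = eval4 T (dl i) x x (dl l) * eps l.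
Proof. by rewrite /jacobi mulmx_eta mxE. Qed.

Lemma jacobi_planeE T p (E : 'M[R]_(p, m)) i l :
  jacobi_plane T E i l = \sum_r gmet (row r E) (row r E) * jacobi T (row r E) i l.
Proof. by rewrite /jacobi_plane summxE; apply eq_bigr => r _; rewrite mxE. Qed.

Lemma lin_sum (F : 'rV[R]_m -> R) :
  (forall x y, F (x + y) = F x + F y) -> (forall a x, F (a *: x) = a * F x) ->
  forall (I : finType) (c : I -> R) (v : I -> 'rV[R]_m),
  F (\sum_i c i *: v i) = \sum_i c i * F (v i).
Proof.
move=> FD FZ I c v; have F0 : F 0 = 0 by rewrite -(scale0r 0) FZ mul0r.
by elim/big_rec2: _ => [//|i y1 y2 _ <-]; rewrite FD FZ.
Qed.

Lemma eval4_exp4 T x y z w :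
  eval4 T x y z w = \sum_l w 0 l * eval4 T x y z (dl l).
Proof.
have -> : eval4 T x y z w = eval4 T x y z (\sum_l w 0 l *: dl l) by rewrite -row_sum_delta.
by apply: lin_sum => [a b|a b]; rewrite ?eval4D4 ?eval4Z4.
Qed.

Lemma eval4_sym_u T x y z : alg_curv T -> eval4 T x z z y = eval4 T y z z x.
Proof.
move=> H; rewrite eval4_pair // eval4_antisym12 // eval4_antisym34 //; ring.
Qed.

Lemma eval4_uu T u y z : alg_curv T -> eval4 T u u y z = 0.
Proof.
move=> H; have := eval4_antisym12 u u y z H.
by move/eqP; rewrite -addr_eq0 -mulr2n mulrn_eq0 /= => /eqP.
Qed.

Lemma tr_sq (A : 'M[R]_m) : \tr (A *m A) = \sum_i \sum_l A i l * A l i.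
Proof. by rewrite /mxtrace; apply eq_bigr => i _; rewrite mxE. Qed.

End Gen.
Lemma lead_zero (R : realType) (c4 c2 c0 d2 d4 b : R) : 0 <= c4 ->
  (forall l : R, 1 <= l ->
     `|l ^+ 4 * c4 + l ^+ 2 * c2 + c0 + l^-1 ^+ 2 * d2 + l^-1 ^+ 4 * d4| <= b) ->
  c4 = 0.
Proof.
move=> c4ge H.
have [c4le0|c4pos] := lerP c4 0; first by apply/le_anti/andP.
have b0 : 0 <= b := le_trans (normr_ge0 _) (H 1 (lexx 1)).
set D := `|c2| + `|c0| + `|d2| + `|d4|.
have D0 : 0 <= D by rewrite /D !addr_ge0.
have DE : D = `|c2| + `|c0| + `|d2| + `|d4| by [].
clearbody D.
set l := 1 + (b + D) / c4.
have l1 : 1 <= l by rewrite /l lerDl divr_ge0 ?addr_ge0 // ltW.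
have l0 : 0 < l by apply: lt_le_trans l1.
have lc : l * c4 = c4 + (b + D) by rewrite /l mulrDl mul1r divfK // gt_eqF.
move: (H l l1); rewrite ler_norml => /andP[_ HX].
set t := l^-1 in HX *.
have t0 : 0 < t by rewrite invr_gt0.
have t1 : t <= 1 by rewrite invf_le1.
have lt1 : l * t = 1 by rewrite mulfV // gt_eqF.
clearbody t l.
have P2 : - (`|c2|) <= c2 by rewrite lerNl ler_normr lexx orbT.
have P0 : - (`|c0|) <= c0 by rewrite lerNl ler_normr lexx orbT.
have P3 : - (`|d2|) <= d2 by rewrite lerNl ler_normr lexx orbT.
have P4 : - (`|d4|) <= d4 by rewrite lerNl ler_normr lexx orbT.
have A2 : 0 <= `|c2| by []. have A0 : 0 <= `|c0| by [].
have A3 : 0 <= `|d2| by []. have A4 : 0 <= `|d4| by [].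
have l2 : 1 <= l ^+ 2 by rewrite expr_ge1 // ltW.
have t2a : 0 <= t ^+ 2 by rewrite exprn_ge0 // ltW.
have t4a : 0 <= t ^+ 4 by rewrite exprn_ge0 // ltW.
have t2b : t ^+ 2 <= 1 by rewrite exprn_ile1 // ltW.
have t4b : t ^+ 4 <= 1 by rewrite exprn_ile1 // ltW.
have Q2 : - (l ^+ 2 * `|c2|) <= l ^+ 2 * c2 by rewrite -mulrN ler_wpM2l // ltW // exprn_gt0.
have Q3 : - (`|d2|) <= t ^+ 2 * d2.
  have [d2p|d2n] := lerP 0 d2.
    by apply: le_trans (mulr_ge0 t2a d2p); rewrite oppr_le0.
  rewrite ltr0_norm // opprK; nra.
have Q4 : - (`|d4|) <= t ^+ 4 * d4.
  have [d4p|d4n] := lerP 0 d4.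
    by apply: le_trans (mulr_ge0 t4a d4p); rewrite oppr_le0.
  rewrite ltr0_norm // opprK; nra.
have E1 : l ^+ 4 * c4 <= b + l ^+ 2 * D.
  have : l ^+ 4 * c4 <= b + l ^+ 2 * `|c2| + `|c0| + `|d2| + `|d4| by lra.
  move/le_trans; apply; rewrite DE !mulrDr.
  have : `|c0| <= l ^+ 2 * `|c0| by rewrite ler_peMl.
  have : `|d2| <= l ^+ 2 * `|d2| by rewrite ler_peMl.
  have : `|d4| <= l ^+ 2 * `|d4| by rewrite ler_peMl.
  lra.
have E2 : b + l ^+ 2 * D <= l ^+ 2 * (b + D).
  by rewrite mulrDr; nra.
have E3 : l ^+ 2 * c4 <= b + D.
  have : l ^+ 2 * (l ^+ 2 * c4) <= l ^+ 2 * (b + D).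
    by rewrite mulrA -exprD; apply: le_trans E1 E2.
  by rewrite ler_pM2l // exprn_gt0.
have E4 : l * c4 <= l ^+ 2 * c4.
  by rewrite expr2 -mulrA ler_peMl // mulr_ge0 // ltW.
have : c4 + (b + D) <= b + D by rewrite -lc; apply: le_trans E4 E3.
move=> Hc; lra.
Qed.

Section Core.
Variables (R : realType) (n k' : nat).
Local Notation m := n.+3.
Local Notation eta := (minkowski R m).
Local Notation dl i := (delta_mx 0 i : 'rV[R]_m).
Local Notation eps := (@epsm R m).
Implicit Types (u v w x y z : 'rV[R]_m).

Definition i0 : 'I_m := ord0.
Definition i1 : 'I_m := Ordinal (isT : (1 < n.+3)%N).

Variables (T : tensor4 R m) (f : 'I_m -> 'rV[R]_m).
Hypothesis HT : alg_curv T.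
Hypothesis Hf : forall a b, gmet (f a) (f b) = if a == b then eps a else 0.
Hypothesis Hk : (k' <= n.+1)%N.

Definition idx (r : 'I_k'.+1) : 'I_m := inord (val r).+1.
Lemma idx_val r : val (idx r) = (val r).+1.
Proof.
rewrite /idx /= inordK // ltnS; apply: leq_trans (ltn_ord r) _; rewrite ltnS.
by apply: leq_trans Hk _.
Qed.

Definition Vf (C S : R) (r : 'I_k'.+1) : 'rV[R]_m :=
  if val r == 0%N then C *: f i0 + S *: f i1 else f (idx r).
Definition Ef C S : 'M[R]_(k'.+1, m) := \matrix_r Vf C S r.

Lemma eps0 : eps i0 = -1. Proof. by []. Qed.
Lemma epsS (a : 'I_m) : val a != 0%N -> eps a = 1.
Proof. by rewrite /epsm => /negPf ->. Qed.

Lemma gmet_f a b : a != b -> gmet (f a) (f b) = 0.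
Proof. by rewrite Hf => /negPf ->. Qed.
Lemma gmet_ff a : gmet (f a) (f a) = eps a.
Proof. by rewrite Hf eqxx. Qed.

Lemma neq_val (a b : 'I_m) : val a != val b -> a != b.
Proof. by apply: contra => /eqP ->. Qed.

Lemma gmet_V0 C S r : val r != 0%N -> gmet (C *: f i0 + S *: f i1) (f (idx r)) = 0.
Proof.
move=> r0.
have h0 : i0 != idx r by apply: neq_val; rewrite idx_val.
have h1 : i1 != idx r by apply: neq_val; rewrite idx_val /= eqSS eq_sym.
by rewrite gmetDl !gmetZl (gmet_f h0) (gmet_f h1) !mulr0 addr0.
Qed.

Lemma gmet_V00 C S : gmet (C *: f i0 + S *: f i1) (C *: f i0 + S *: f i1) = S ^+ 2 - C ^+ 2.
Proof.
rewrite !gmetDl !gmetDr !gmetZl !gmetZr !gmet_ff !gmet_f ?eps0 ?epsS //.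
by rewrite expr2 expr2; ring.
Qed.

Lemma Ef_ortho C S : C ^+ 2 - S ^+ 2 = 1 -> orthonormal_frame (Ef C S).
Proof.
move=> CS; split.
  move=> r r' rr'; rewrite gram_entry !rowK /Vf.
  case: eqP => [r0|/eqP r0]; case: eqP => [r'0|/eqP r'0].
  - by move: rr'; rewrite (_ : r = r') ?eqxx //; apply: val_inj; rewrite r0 r'0.
  - exact: gmet_V0.
  - by rewrite gmetC; apply: gmet_V0.
  apply: gmet_f; apply: neq_val; rewrite !idx_val eqSS.
  by apply: contra rr' => /eqP/val_inj ->.
move=> r; rewrite gram_entry !rowK /Vf; case: eqP => [r0|/eqP r0].
  by right; rewrite gmet_V00 -CS opprB.
by left; rewrite gmet_ff epsS // idx_val.
Qed.


Lemma JP_Ef C S i l : C ^+ 2 - S ^+ 2 = 1 ->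
  jacobi_plane T (Ef C S) i l = - jacobi T (C *: f i0 + S *: f i1) i l
     + \sum_(r < k') jacobi T (f (inord r.+2)) i l.
Proof.
move=> CS; rewrite jacobi_planeE big_ord_recl rowK /Vf /= gmet_V00.
have -> : S ^+ 2 - C ^+ 2 = -1 by rewrite -CS opprB.
rewrite mulN1r.
congr (_ + _); apply eq_bigr => r _; rewrite rowK /Vf /=.
have -> : idx (lift ord0 r) = inord r.+2 by rewrite /idx /= /bump leq0n add1n.
rewrite gmet_ff epsS ?mul1r //= inordK //.
by have := ltn_ord r; move: Hk; lia.
Qed.

Lemma jac_comb a b x y i l : jacobi T (a *: x + b *: y) i l =
  a ^+ 2 * jacobi T x i l
  + a * b * ((eval4 T (dl i) x y (dl l) + eval4 T (dl i) y x (dl l)) * eps l)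
  + b ^+ 2 * jacobi T y i l.
Proof.
by rewrite !jacobiE eval4D2 !eval4Z2 !eval4D3 !eval4Z3; ring.
Qed.

Definition uu := f i0 + f i1.
Definition j0 i l := jacobi T (f i0) i l.
Definition j1 i l := jacobi T (f i1) i l.
Definition ju i l := jacobi T uu i l.
Definition q0 i l := \sum_(r < k') jacobi T (f (inord r.+2)) i l.
Definition pp i l := - ju i l / 4%:R.
Definition qq i l := - (j0 i l - j1 i l) / 2%:R + q0 i l.
Definition ss i l := - (2%:R * j0 i l + 2%:R * j1 i l - ju i l) / 4%:R.

Lemma A_entry (lam : R) i l : lam != 0 ->
  let C := (lam + lam^-1) / 2%:R in let S := (lam - lam^-1) / 2%:R in
  C ^+ 2 - S ^+ 2 = 1 /\
  jacobi_plane T (Ef C S) i l =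
    lam ^+ 2 * pp i l + qq i l + lam^-1 ^+ 2 * ss i l.
Proof.
move=> l0 C S.
have CS : C ^+ 2 - S ^+ 2 = 1 by rewrite /C /S; field.
split=> //; rewrite JP_Ef // jac_comb.
have hu : ju i l = j0 i l + ((eval4 T (dl i) (f i0) (f i1) (dl l)
      + eval4 T (dl i) (f i1) (f i0) (dl l)) * eps l) + j1 i l.
  by rewrite /ju /uu /j0 /j1 -(scale1r (f i0)) -(scale1r (f i1)) jac_comb !scale1r; ring.
move: hu; rewrite /pp /qq /ss /q0 /j0 /j1.
set K := (_ * eps l); set J0 := jacobi T (f i0) i l; set J1 := jacobi T (f i1) i l.
move=> ->; rewrite /C /S; field; by [].
Qed.

Lemma sum5 (I : finType) (a b c d e : I -> R) (x1 x2 x4 x5 : R) :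
  \sum_i (x1 * a i + x2 * b i + c i + x4 * d i + x5 * e i) =
  x1 * \sum_i a i + x2 * \sum_i b i + \sum_i c i + x4 * \sum_i d i + x5 * \sum_i e i.
Proof. by rewrite !big_split /= !mulr_sumr. Qed.

Definition c4 := \sum_i \sum_l pp i l * pp l i.
Definition c2 := \sum_i \sum_l (pp i l * qq l i + qq i l * pp l i).
Definition c0 := \sum_i \sum_l (qq i l * qq l i + pp i l * ss l i + ss i l * pp l i).
Definition d2 := \sum_i \sum_l (qq i l * ss l i + ss i l * qq l i).
Definition d4 := \sum_i \sum_l ss i l * ss l i.

Lemma tr_expand (lam : R) : lam != 0 ->
  let C := (lam + lam^-1) / 2%:R in let S := (lam - lam^-1) / 2%:R in
  \tr (jacobi_plane T (Ef C S) *m jacobi_plane T (Ef C S)) =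
  lam ^+ 4 * c4 + lam ^+ 2 * c2 + c0 + lam^-1 ^+ 2 * d2 + lam^-1 ^+ 4 * d4.
Proof.
move=> l0 C S; rewrite tr_sq.
rewrite /c4 /c2 /c0 /d2 /d4 -sum5; apply eq_bigr => i _.
rewrite -sum5; apply eq_bigr => l _.
have [_ ->] := A_entry i l l0; have [_ ->] := A_entry l i l0.
by field.
Qed.

Hypothesis Hb : exists b, forall E : 'M[R]_(k'.+1, m), orthonormal_frame E ->
  `|\tr (jacobi_plane T E *m jacobi_plane T E)| <= b.

Lemma c4_zero : 0 <= c4 -> c4 = 0.
Proof.
move=> c4ge; have [b Hbb] := Hb.
apply: (@lead_zero R c4 c2 c0 d2 d4 b) => // lam l1.
have l0 : lam != 0 by rewrite gt_eqF // (lt_le_trans ltr01 l1).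
rewrite -(tr_expand l0); apply: Hbb.
by have [CS _] := A_entry ord0 ord0 l0; apply: Ef_ortho.
Qed.

Definition Lmat : 'M[R]_m := \matrix_a f a.
Lemma L_eta : Lmat *m eta *m Lmat^T = eta.
Proof. by apply/matrixP=> a b; rewrite gram_entry !rowK Hf etaE. Qed.

Lemma LtL : Lmat^T *m eta *m Lmat = eta.
Proof.
have h : Lmat *m (eta *m Lmat^T *m eta) = 1%:M by rewrite !mulmxA L_eta eta2.
have := mulmx1C h; rewrite -!mulmxA => h2.
have : eta *m (eta *m (Lmat^T *m (eta *m Lmat))) = eta *m 1%:M by rewrite h2.
by rewrite mulmxA eta2 mul1mx mulmx1 !mulmxA.
Qed.

Lemma E' p (X : 'M[R]_(p, m)) : X *m Lmat^T *m eta *m Lmat = X *m eta.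
Proof. by rewrite -!mulmxA [Lmat^T *m (eta *m Lmat)]mulmxA LtL. Qed.

Definition Bu : 'M[R]_m := \matrix_(i, l) eval4 T (dl i) uu uu (dl l).
Definition Bp : 'M[R]_m := \matrix_(a, b) eval4 T (f a) uu uu (f b).

Lemma Bp_eq : Bp = Lmat *m Bu *m Lmat^T.
Proof.
apply/matrixP=> a b; rewrite !mxE eval4_exp1.
under eq_bigr => i _ do rewrite eval4_exp4 mulr_sumr.
rewrite exchange_big; apply eq_bigr => l _; rewrite !mxE mulr_suml.
by apply eq_bigr => i _; rewrite !mxE; ring.
Qed.

Lemma trJ : \tr (Bp *m eta *m (Bp *m eta)) = \tr (Bu *m eta *m (Bu *m eta)).
Proof.
rewrite Bp_eq -!mulmxA mxtrace_mulC !mulmxA !E'.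
by rewrite -!mulmxA.
Qed.

Lemma Bp_sym a b : Bp a b = Bp b a.
Proof. by rewrite !mxE eval4_sym_u. Qed.

Lemma Bp01 b : Bp i0 b = - Bp i1 b.
Proof.
apply/eqP; rewrite -addr_eq0 !mxE -eval4D1.
by rewrite -/uu eval4_uu.
Qed.

Lemma split01 (G : 'I_m -> R) : G i0 = G i1 ->
  \sum_a eps a * G a = \sum_(a | (2 <= val a)%N) G a.
Proof.
move=> G01; rewrite (bigD1 i0) // (bigD1 i1) //= eps0 epsS // G01 mul1r mulN1r addKr.
apply: eq_big => [a|a].
  by rewrite -!val_eqE /=; case: (val a) => [|[|]].
by move=> /andP[h0 _]; rewrite epsS ?mul1r //; move: h0; rewrite -val_eqE.
Qed.

Lemma trJ_pos : \tr (jacobi T uu *m jacobi T uu) =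
  \sum_(a | (2 <= val a)%N) \sum_(b | (2 <= val b)%N) Bp a b ^+ 2.
Proof.
rewrite /jacobi -/Bu -trJ tr_sq.
transitivity (\sum_a eps a * \sum_b eps b * Bp a b ^+ 2).
  apply eq_bigr => a _; rewrite mulr_sumr; apply eq_bigr => b _.
  by rewrite !mulmx_eta (Bp_sym b a); ring.
rewrite split01; last first.
  by apply eq_bigr => b _; rewrite Bp01 sqrrN.
apply eq_bigr => a _; rewrite split01 //.
by rewrite Bp_sym Bp01 sqrrN Bp_sym.
Qed.

Theorem core a b : (2 <= val a)%N -> (2 <= val b)%N ->
  eval4 T (f a) uu uu (f b) = 0.
Proof.
move=> ha hb.
have Hc4 : c4 = \tr (jacobi T uu *m jacobi T uu) / 16%:R.
  rewrite tr_sq /c4 mulr_suml; apply eq_bigr => i _; rewrite mulr_suml.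
  by apply eq_bigr => l _; rewrite /pp /ju; field.
have pos : 0 <= \tr (jacobi T uu *m jacobi T uu).
  by rewrite trJ_pos; apply: sumr_ge0 => i _; apply: sumr_ge0 => j _; apply: sqr_ge0.
have := c4_zero; rewrite Hc4 => /(_ (divr_ge0 pos (ler0n _ _))) /eqP.
rewrite mulf_eq0 invr_eq0 pnatr_eq0 orbF trJ_pos => Hs.
have Hin : forall i : 'I_m, (2 <= val i)%N ->
    0 <= \sum_(j | (2 <= val j)%N) Bp i j ^+ 2.
  by move=> i _; apply: sumr_ge0 => j _; exact: sqr_ge0.
have H := psumr_eq0P Hin (eqP Hs).
have Hin2 : forall j : 'I_m, (2 <= val j)%N -> 0 <= Bp a j ^+ 2.
  by move=> j _; exact: sqr_ge0.
have H2 := psumr_eq0P Hin2 (H a ha).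
by have /eqP := H2 b hb; rewrite sqrf_eq0 mxE => /eqP.
Qed.

End Core.

Section Transfer.
Variables (R : realType) (n k' : nat).
Local Notation m := n.+3.
Local Notation eta := (minkowski R m).
Local Notation dl i := (delta_mx 0 i : 'rV[R]_m).
Local Notation eps := (@epsm R m).
Local Notation i0 := (@i0 n).
Local Notation i1 := (@i1 n).
Implicit Types (u v w x y z : 'rV[R]_m).

Definition lorentz (f : 'I_m -> 'rV[R]_m) :=
  forall a b, gmet (f a) (f b) = if a == b then eps a else 0.

Definition sw (s a : 'I_m) : 'I_m := if a == i1 then s else if a == s then i1 else a.

Lemma sw_inv s a : sw s (sw s a) = a.
Proof.
rewrite /sw; have [->|a1] := eqVneq a i1.
  by have [->|s1] := eqVneq s i1; rewrite ?eqxx.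
have [->|as_] := eqVneq a s; first by rewrite eqxx.
by rewrite (negPf a1) (negPf as_).
Qed.

Lemma sw_inj s : injective (sw s).
Proof. exact: can_inj (sw_inv s). Qed.

Lemma eps_sw s a : val s != 0%N -> eps (sw s a) = eps a.
Proof.
move=> s0; rewrite /sw; have [->|a1] := eqVneq a i1; first by rewrite (epsS R s0) epsS.
by have [->|as_] := eqVneq a s; first rewrite (epsS R s0) epsS.
Qed.

Variables (T : tensor4 R m).
Hypothesis HT : alg_curv T.
Hypothesis Hk : (k' <= n.+1)%N.
Hypothesis Hb : exists b, forall E : 'M[R]_(k'.+1, m), orthonormal_frame E ->
  `|\tr (jacobi_plane T E *m jacobi_plane T E)| <= b.

Lemma coreS (f : 'I_m -> 'rV[R]_m) (s i j : 'I_m) (e : R) :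
  lorentz f -> val s != 0%N -> e * e = 1 ->
  i != i0 -> i != s -> j != i0 -> j != s ->
  eval4 T (f i) (f i0 + e *: f s) (f i0 + e *: f s) (f j) = 0.
Proof.
move=> Hf s0 ee hi0 his hj0 hjs.
pose sg a : R := if a == i1 then e else 1.
pose g a := sg a *: f (sw s a).
have Hg : lorentz g.
  move=> a b; rewrite /g gmetZl gmetZr Hf (inj_eq (@sw_inj s)) eps_sw //.
  have [->|ab] := eqVneq a b; last by rewrite !mulr0.
  by rewrite /sg; case: eqP => _; rewrite ?mulr1 ?mul1r // mulrA ee mul1r.
have i0s : i0 != s by apply: contra s0 => /eqP <-.
have i01 : i0 != i1 by [].
have g0 : g i0 = f i0 by rewrite /g /sg /sw (negPf i01) (negPf i0s) scale1r.
have g1 : g i1 = e *: f s by rewrite /g /sg /sw !eqxx.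
have ga : forall a, a != i0 -> a != s -> g (sw s a) = f a /\ (2 <= val (sw s a))%N.
  move=> a a0 as_; have swa1 : sw s a != i1.
    by apply: contra as_ => /eqP h; rewrite -(sw_inv s a) h /sw eqxx.
  split; first by rewrite /g /sg (negPf swa1) scale1r sw_inv.
  have swa0 : sw s a != i0.
    apply: contra a0 => /eqP h; rewrite -(sw_inv s a) h /sw (negPf i01) (negPf i0s) //.
  move: swa1 swa0; rewrite -!val_eqE /=; case: (val (sw s a)) => [|[|]] //.
have [gi hi] := ga i hi0 his; have [gj hj] := ga j hj0 hjs.
have := core HT Hg Hk Hb hi hj.
by rewrite /uu gi gj g0 g1.
Qed.

Lemma rel12 (f : 'I_m -> 'rV[R]_m) (s i j : 'I_m) :
  lorentz f -> val s != 0%N -> i != i0 -> i != s -> j != i0 -> j != s ->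
  eval4 T (f i) (f i0) (f i0) (f j) + eval4 T (f i) (f s) (f s) (f j) = 0 /\
  eval4 T (f i) (f i0) (f s) (f j) + eval4 T (f i) (f s) (f i0) (f j) = 0.
Proof.
move=> Hf s0 hi0 his hj0 hjs.
have Hp := coreS Hf s0 (mulr1 1) hi0 his hj0 hjs.
have em : (-1) * (-1) = 1 :> R by rewrite mulrNN mulr1.
have Hm := coreS Hf s0 em hi0 his hj0 hjs.
move: Hp Hm; rewrite !eval4D2 !eval4D3 !eval4Z2 !eval4Z3.
set A := eval4 T _ (f i0) (f i0) _; set B := eval4 T _ (f i0) (f s) _.
set C := eval4 T _ (f s) (f i0) _; set D := eval4 T _ (f s) (f s) _.
move=> Hp Hm; split; lra.
Qed.

End Transfer.

Section GT.
Variables (R : realType) (m : nat).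
Local Notation eta := (minkowski R m).
Local Notation dl i := (delta_mx 0 i : 'rV[R]_m).
Local Notation eps := (@epsm R m).
Implicit Types (u v w x y z : 'rV[R]_m).

Definition Gt : tensor4 R m := fun a b c d => eta a d * eta b c - eta a c * eta b d.

Lemma eta_sym a b : eta a b = eta b a.
Proof. by rewrite !etaE eq_sym; case: eqP => // ->. Qed.

Lemma sum_eta_l (F : 'I_m -> R) a : \sum_l F l * eta a l = F a * eps a.
Proof.
rewrite (bigD1 a) //= big1 ?addr0; first by rewrite etaE eqxx.
by move=> l /negPf la; rewrite etaE eq_sym la mulr0.
Qed.

Lemma eval4_G x y z w : eval4 Gt x y z w = gmet x w * gmet y z - gmet x z * gmet y w.
Proof.
rewrite eval4_nested.
transitivity (\sum_i x 0 i * (\sum_j y 0 j *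
   (z 0 j * eps j * (w 0 i * eps i) - z 0 i * eps i * (w 0 j * eps j)))).
  apply eq_bigr => i _; congr (_ * _); apply eq_bigr => j _; congr (_ * _).
  transitivity (\sum_k z 0 k * (eta j k * (w 0 i * eps i) - eta i k * (w 0 j * eps j))).
    apply eq_bigr => k _; congr (_ * _).
    rewrite (_ : \sum_l _ = \sum_l (eta j k * (w 0 l * eta i l) - eta i k * (w 0 l * eta j l))).
      by rewrite sumrB -!mulr_sumr !sum_eta_l.
    by apply eq_bigr => l _; rewrite /Gt; ring.
  rewrite (_ : \sum_k _ = \sum_k ((w 0 i * eps i) * (z 0 k * eta j k) - (w 0 j * eps j) * (z 0 k * eta i k))).
    by rewrite sumrB -!mulr_sumr !sum_eta_l; ring.
  by apply eq_bigr => k _; ring.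
rewrite !gmetE !mulr_suml -sumrB; apply eq_bigr => i _.
rewrite !big_distrr /= -sumrB; apply eq_bigr => j _; ring.
Qed.

Lemma alg_curv_G : alg_curv Gt.
Proof.
split=> a b c d; rewrite /Gt; rewrite ?(eta_sym b a) ?(eta_sym c a) ?(eta_sym d a)
  ?(eta_sym c b) ?(eta_sym d b) ?(eta_sym d c); ring.
Qed.

Definition Tp (T : tensor4 R m) (c : R) : tensor4 R m :=
  fun a b c' d => T a b c' d - c * Gt a b c' d.

Lemma eval4_Tp T c x y z w :
  eval4 (Tp T c) x y z w = eval4 T x y z w - c * eval4 Gt x y z w.
Proof.
rewrite /eval4 mulr_sumr -sumrB; apply eq_bigr => i _.
rewrite mulr_sumr -sumrB; apply eq_bigr => j _.
rewrite mulr_sumr -sumrB; apply eq_bigr => k _.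
rewrite mulr_sumr -sumrB; apply eq_bigr => l _.
rewrite /Tp; ring.
Qed.

Lemma alg_curv_Tp T c : alg_curv T -> alg_curv (Tp T c).
Proof.
case=> A1 A2 A3 A4; have [G1 G2 G3 G4] := alg_curv_G.
split=> a b c' d; rewrite /Tp.
- by rewrite A1 G1; ring.
- by rewrite A2 G2; ring.
- by rewrite A3 G3.
- rewrite (_ : _ + _ + _ = (T a b c' d + T b c' a d + T c' a b d)
     - c * (Gt a b c' d + Gt b c' a d + Gt c' a b d)); last by ring.
  by rewrite A4 G4 mulr0 subr0.
Qed.

End GT.

Section Abs.
Variables (R : realType) (m : nat) (z0 : 'I_m) (S : tensor4 R m).
Hypothesis HS : alg_curv S.
Hypothesis F1 : forall s i j, s != z0 -> i != z0 -> i != s -> j != z0 -> j != s ->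
  S i z0 z0 j + S i s s j = 0.
Hypothesis F2 : forall s i j, s != z0 -> i != z0 -> i != s -> j != z0 -> j != s ->
  S i z0 s j + S i s z0 j = 0.
Hypothesis F3 : forall p q, p != z0 -> q != z0 -> p != q -> S p z0 z0 q = 0.
Hypothesis D : forall p, p != z0 -> S p z0 z0 p = 0.
Hypothesis F4 : forall i s t j, i != z0 -> s != z0 -> t != z0 -> j != z0 ->
  i != s -> i != t -> i != j -> s != t -> s != j -> t != j ->
  S i s t j + S i t s j = 0.

Let A1 := let: And4 a _ _ _ := HS in a.
Let A2 := let: And4 _ a _ _ := HS in a.
Let A3 := let: And4 _ _ a _ := HS in a.
Let A4 := let: And4 _ _ _ a := HS in a.

Lemma Saa a c d : S a a c d = 0.
Proof. by have := A1 a a c d; move/eqP; rewrite -addr_eq0 -mulr2n mulrn_eq0 => /eqP. Qed.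
Lemma Scc a b c : S a b c c = 0.
Proof. by have := A2 a b c c; move/eqP; rewrite -addr_eq0 -mulr2n mulrn_eq0 => /eqP. Qed.

Lemma K0 b d : b != z0 -> S z0 b b d = 0.
Proof.
move=> b0; have [->|db] := eqVneq d b; first exact: Scc.
have [->|d0] := eqVneq d z0; first by rewrite A3 D.
have bd : b != d by rewrite eq_sym.
have h := F2 d0 b0 bd b0 bd.
have e1 := A1 b z0 d b; have e2 := A2 z0 b d b; have e3 := A3 b d z0 b.
lra.
Qed.

Lemma K a b d : S a b b d = 0.
Proof.
have [->|b0] := eqVneq b z0.
  have [->|a0] := eqVneq a z0; first exact: Saa.
  have [->|d0] := eqVneq d z0; first exact: Scc.
  have [->|ad] := eqVneq a d; first exact: D.
  exact: F3.
have [->|ab] := eqVneq a b; first exact: Saa.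
have [->|db] := eqVneq d b; first exact: Scc.
have [->|a0] := eqVneq a z0; first exact: K0.
have [->|d0] := eqVneq d z0.
  by rewrite A3 A1 A2 opprK K0.
have h := F1 b0 a0 ab d0 db.
have [ad|ad] := eqVneq a d.
  by move: h; rewrite ad D // add0r.
by move: h; rewrite F3 // add0r.
Qed.

Lemma L a b c : S a b c a = 0.
Proof. by rewrite A1 A2 opprK K. Qed.

Lemma Fz a b c : a != z0 -> b != z0 -> c != z0 -> a != b -> a != c -> b != c ->
  S a z0 b c = 0.
Proof.
have cyc : forall x y w, x != z0 -> y != z0 -> w != z0 -> x != y -> x != w -> y != w ->
    S x z0 y w = S w z0 x y.
  move=> x y w x0 y0 w0 xy xw yw.
  have wy : w != y by rewrite eq_sym.
  have h := F2 y0 x0 xy w0 wy.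
  have e1 := A1 x y z0 w; have e2 := A3 y x z0 w; have e3 := A1 z0 w y x.
  have e4 := A2 w z0 y x.
  lra.
move=> a0 b0 c0 ab ac bc.
have c1 := cyc a b c a0 b0 c0 ab ac bc.
have ba : b != a by rewrite eq_sym.
have c2 := cyc b a c b0 a0 c0 ba bc ac.
have an := A2 c z0 b a; have bi := A4 a z0 b c; have e1 := A1 z0 b a c.
have e2 : S b a z0 c = S c z0 a b.
  by rewrite A3 A1 A2 opprK.
lra.
Qed.

Lemma Hd a b c d : a != z0 -> b != z0 -> c != z0 -> d != z0 ->
  a != b -> a != c -> a != d -> b != c -> b != d -> c != d -> S a b c d = 0.
Proof.
move=> a0 b0 c0 d0 ab ac ad bc bd cd.
have h1 := F4 a0 b0 c0 d0 ab ac ad bc bd cd.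
have cb : c != b by rewrite eq_sym.
have ca : c != a by rewrite eq_sym.
have ba : b != a by rewrite eq_sym.
have h2 := F4 c0 b0 a0 d0 cb ca cd ba bd ad.
have e1 := A1 b c a d; have e2 := A1 c a b d; have bi := A4 a b c d.
lra.
Qed.

Lemma S_zero a b c d : S a b c d = 0.
Proof.
have [->|ab] := eqVneq a b; first exact: Saa.
have [->|cd] := eqVneq c d; first exact: Scc.
have [->|bc] := eqVneq b c; first exact: K.
have [->|ad] := eqVneq a d; first exact: L.
have [->|ac] := eqVneq a c; first by rewrite A2 L oppr0.
have [->|bd] := eqVneq b d; first by rewrite A1 L oppr0.
have [ea|a0] := eqVneq a z0.
  subst a; rewrite A1 Fz ?oppr0 //; by rewrite eq_sym.
have [eb|b0] := eqVneq b z0.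
  subst b; rewrite Fz //; by rewrite eq_sym.
have [ec|c0] := eqVneq c z0.
  subst c; rewrite A3 A1 Fz ?oppr0 //; by rewrite eq_sym.
have [ed|d0] := eqVneq d z0.
  subst d; rewrite A2 A3 A1 opprK Fz //; by rewrite eq_sym.
exact: Hd.
Qed.

End Abs.

Section Concrete.
Variables (R : realType) (n k' : nat).
Local Notation m := n.+3.
Local Notation eta := (minkowski R m).
Local Notation dl i := (delta_mx 0 i : 'rV[R]_m).
Local Notation eps := (@epsm R m).
Local Notation i0 := (@i0 n).
Local Notation i1 := (@i1 n).
Implicit Types (u v w x y z : 'rV[R]_m).

Definition i2 : 'I_m := Ordinal (isT : (2 < n.+3)%N).

Variables (T : tensor4 R m).
Hypothesis HT : alg_curv T.
Hypothesis Hk : (k' <= n.+1)%N.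
Hypothesis Hb : exists b, forall E : 'M[R]_(k'.+1, m), orthonormal_frame E ->
  `|\tr (jacobi_plane T E *m jacobi_plane T E)| <= b.

Definition cc := T i1 i2 i2 i1.
Definition St := Tp T cc.

Lemma HSt : alg_curv St.
Proof. exact: alg_curv_Tp. Qed.

Lemma nz0 (s : 'I_m) : s != i0 -> val s != 0%N.
Proof. by apply: contra => /eqP h; apply/eqP/val_inj. Qed.

Lemma relS (f : 'I_m -> 'rV[R]_m) (s i j : 'I_m) :
  lorentz f -> s != i0 -> i != i0 -> i != s -> j != i0 -> j != s ->
  eval4 St (f i) (f i0) (f i0) (f j) + eval4 St (f i) (f s) (f s) (f j) = 0 /\
  eval4 St (f i) (f i0) (f s) (f j) + eval4 St (f i) (f s) (f i0) (f j) = 0.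
Proof.
move=> Hf s0 hi0 his hj0 hjs.
have [h1 h2] := rel12 HT Hk Hb Hf (nz0 s0) hi0 his hj0 hjs.
rewrite /St !eval4_Tp !eval4_G.
have g00 : gmet (f i0) (f i0) = -1 by rewrite Hf eqxx.
have gss : gmet (f s) (f s) = 1 by rewrite Hf eqxx epsS // nz0.
have gi0 : gmet (f i) (f i0) = 0 by rewrite Hf (negPf hi0).
have gis : gmet (f i) (f s) = 0 by rewrite Hf (negPf his).
have g0j : gmet (f i0) (f j) = 0 by rewrite Hf eq_sym (negPf hj0).
have gsj : gmet (f s) (f j) = 0 by rewrite Hf eq_sym (negPf hjs).
have g0s : gmet (f i0) (f s) = 0 by rewrite Hf eq_sym (negPf s0).
have gs0 : gmet (f s) (f i0) = 0 by rewrite Hf (negPf s0).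
rewrite g00 gss gi0 gis g0j gsj g0s gs0.
split; lra.
Qed.

Lemma lorentz_std : lorentz (fun a => dl a).
Proof. by move=> a b; rewrite gmet_dl. Qed.

Lemma F1s s i j : s != i0 -> i != i0 -> i != s -> j != i0 -> j != s ->
  St i i0 i0 j + St i s s j = 0.
Proof.
move=> s0 i0' is' j0' js'.
have [h _] := @relS (fun a => dl a) s i j lorentz_std s0 i0' is' j0' js'.
by rewrite !eval4_dl in h.
Qed.

Lemma F2s s i j : s != i0 -> i != i0 -> i != s -> j != i0 -> j != s ->
  St i i0 s j + St i s i0 j = 0.
Proof.
move=> s0 i0' is' j0' js'.
have [_ h] := @relS (fun a => dl a) s i j lorentz_std s0 i0' is' j0' js'.
by rewrite !eval4_dl in h.
Qed.

Lemma Nst : St i1 i2 i2 i1 = 0.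
Proof. by rewrite /St /Tp /Gt /cc !etaE /=; rewrite /epsm /=; ring. Qed.

Lemma Dst p : p != i0 -> St p i0 i0 p = 0.
Proof.
have [A1 A2 A3 A4] := HSt.
have h12 : i1 != i0 by []. have h22 : i2 != i0 by []. have h21 : i2 != i1 by [].
have eq_all : forall a b, a != i0 -> b != i0 -> a != b -> St a i0 i0 a = St b i0 i0 b.
  move=> a b a0 b0 ab; have ba : b != a by rewrite eq_sym.
  have := F1s b0 a0 ab a0 ab; have := F1s a0 b0 ba b0 ba.
  rewrite (A3 b a a b) => h2 h1; lra.
have d1 : St i1 i0 i0 i1 = 0.
  have h12' : i1 != i2 by [].
  have := F1s h22 h12 h12' h12 h12'.
  by rewrite Nst addr0.
move=> p0; have [->//|p1] := eqVneq p i1.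
by rewrite (eq_all p i1) ?d1.
Qed.


Definition al : R := 3%:R / 5%:R.
Definition be : R := 4%:R / 5%:R.

Definition rot (p q a : 'I_m) : 'rV[R]_m :=
  if a == p then al *: dl p + be *: dl q
  else if a == q then (- be) *: dl p + al *: dl q else dl a.

Section Rot.
Variables (p q : 'I_m).
Hypotheses (p0 : p != i0) (q0 : q != i0) (pq : p != q).
Let qp : q != p. Proof. by rewrite eq_sym. Qed.
Let ep : eps p = 1. Proof. by rewrite epsS // nz0. Qed.
Let eq' : eps q = 1. Proof. by rewrite epsS // nz0. Qed.
Let vp := al *: dl p + be *: dl q.
Let vq := (- be) *: dl p + al *: dl q.

Let gexp := (gmetDl, gmetDr, gmetZl, gmetZr, gmet_dl).

Let g_pp : gmet vp vp = 1.
Proof. by rewrite /vp !gexp !eqxx (negPf pq) (negPf qp) ep eq' /al /be; field. Qed.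
Let g_qq : gmet vq vq = 1.
Proof. by rewrite /vq !gexp !eqxx (negPf pq) (negPf qp) ep eq' /al /be; field. Qed.
Let g_pq : gmet vp vq = 0.
Proof. by rewrite /vp /vq !gexp !eqxx (negPf pq) (negPf qp) ep eq' /al /be; field. Qed.
Let g_qp : gmet vq vp = 0.
Proof. by rewrite gmetC g_pq. Qed.
Let g_px (x : 'I_m) : x != p -> x != q -> gmet vp (dl x) = 0.
Proof.
move=> xp xq; rewrite /vp !gexp eq_sym (negPf xp) eq_sym (negPf xq).
by rewrite !mulr0 addr0.
Qed.
Let g_qx (x : 'I_m) : x != p -> x != q -> gmet vq (dl x) = 0.
Proof.
move=> xp xq; rewrite /vq !gexp eq_sym (negPf xp) eq_sym (negPf xq).
by rewrite !mulr0 addr0.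
Qed.

Lemma rotE a : rot p q a = if a == p then vp else if a == q then vq else dl a.
Proof. by []. Qed.

Lemma lorentz_rot : lorentz (rot p q).
Proof.
move=> a b; rewrite !rotE.
case: (boolP (a == p)) => [/eqP ea|ap]; case: (boolP (b == p)) => [/eqP eb|bp].
- by subst; rewrite eqxx g_pp ep.
- subst a; case: (boolP (b == q)) => [/eqP eb|bq].
    by subst; rewrite (negPf pq) g_pq.
  by rewrite g_px // eq_sym (negPf bp).
- subst b; case: (boolP (a == q)) => [/eqP ea|aq].
    by subst; rewrite (negPf qp) g_qp.
  by rewrite gmetC g_px // (negPf ap).
case: (boolP (a == q)) => [/eqP ea|aq]; case: (boolP (b == q)) => [/eqP eb|bq].
- by subst; rewrite eqxx g_qq eq'.
- by subst; rewrite g_qx // eq_sym (negPf bq).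
- by subst; rewrite gmetC g_qx // (negPf aq).
by rewrite gmet_dl.
Qed.
End Rot.

Lemma rot_other (p q a : 'I_m) : a != p -> a != q -> rot p q a = dl a.
Proof. by move=> ap aq; rewrite /rot (negPf ap) (negPf aq). Qed.
Lemma rot_p (p q : 'I_m) : rot p q p = al *: dl p + be *: dl q.
Proof. by rewrite /rot eqxx. Qed.
Lemma rot_q (p q : 'I_m) : p != q -> rot p q q = (- be) *: dl p + al *: dl q.
Proof. by move=> pq; rewrite /rot eq_sym (negPf pq) eqxx. Qed.

Lemma F3s p q : p != i0 -> q != i0 -> p != q -> St p i0 i0 q = 0.
Proof.
move=> p0 q0 pq; have qp : q != p by rewrite eq_sym.
have Hf := lorentz_rot p0 q0 pq.
have [h1 _] := @relS (rot p q) q p p Hf q0 p0 pq p0 pq.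
have [h2 _] := @relS (rot p q) p q q Hf p0 q0 qp q0 qp.
have hpair := eval4_pair (rot p q p) (rot p q q) (rot p q q) (rot p q p) HSt.
have e : eval4 St (rot p q p) (rot p q i0) (rot p q i0) (rot p q p) =
         eval4 St (rot p q q) (rot p q i0) (rot p q i0) (rot p q q) by lra.
have i0p : i0 != p by rewrite eq_sym. have i0q : i0 != q by rewrite eq_sym.
move: e; rewrite (rot_other i0p i0q) rot_p (rot_q pq).
rewrite !(eval4D1, eval4D4, eval4Z1, eval4Z4, eval4_dl) !Dst //.
have [A1 A2 A3 A4] := HSt.
rewrite (A3 q i0 i0 p) (A1 i0 p q i0) (A2 p i0 q i0) opprK.
rewrite /al /be => e; lra.
Qed.

Lemma F4s i s t j : i != i0 -> s != i0 -> t != i0 -> j != i0 ->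
  i != s -> i != t -> i != j -> s != t -> s != j -> t != j ->
  St i s t j + St i t s j = 0.
Proof.
move=> i0' s0 t0 j0 is' it ij st sj tj.
have js : j != s by rewrite eq_sym. have jt : j != t by rewrite eq_sym.
have Hf := lorentz_rot s0 t0 st.
have [h _] := @relS (rot s t) s i j Hf s0 i0' is' j0 js.
have i0s : i0 != s by rewrite eq_sym. have i0t : i0 != t by rewrite eq_sym.
move: h; rewrite (rot_other i0s i0t) (rot_other is' it) (rot_other js jt) rot_p.
rewrite !(eval4D2, eval4D3, eval4Z2, eval4Z3, eval4_dl).
have e1 := F3s i0' j0 ij.
have e2 := F1s s0 i0' is' j0 js. have e3 := F1s t0 i0' it j0 jt.
rewrite /al /be => h; lra.
Qed.

Lemma St_zero a b c d : St a b c d = 0.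
Proof. exact: (S_zero HSt F1s F2s F3s Dst F4s). Qed.

Lemma T_const a b c d : T a b c d = cc * Gt R a b c d.
Proof. by have := St_zero a b c d; rewrite /St /Tp => /eqP; rewrite subr_eq0 => /eqP. Qed.

End Concrete.

Lemma eig_offdiag (F : fieldType) p (A : 'M[F]_p) z :
  (forall i l, i != l -> A i l = 0) -> eigenvalue A z -> exists l, z = A l l.
Proof.
move=> Hd /eigenvalueP [v Hv vnz].
have [l vl] : exists l, v 0 l != 0.
  apply/existsP; apply: contraR vnz; rewrite negb_exists => /forallP H.
  by apply/eqP/matrixP => a b; rewrite ord1 mxE; apply/eqP; rewrite -[_ == _]negbK H.
exists l; have := congr1 (fun M : 'M[F]_(1, p) => M 0 l) Hv; rewrite !mxE.
rewrite (bigD1 l) //= big1 ?addr0 => [h|i il]; last by rewrite Hd ?mulr0.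
by apply: (mulIf vl); rewrite -h mulrC.
Qed.

Lemma eig_row0 (F : fieldType) p (A : 'M[F]_p) (i : 'I_p) :
  (forall l, i != l -> A i l = 0) -> eigenvalue A (A i i).
Proof.
move=> Hd; apply/eigenvalueP; exists (delta_mx 0 i).
  apply/matrixP => a b; rewrite ord1 !mxE (bigD1 i) //= big1 ?addr0.
    rewrite !mxE !eqxx /= mul1r; case: (eqVneq i b) => [->|ib]; first by rewrite mulr1.
    by rewrite Hd // mulr0.
  by move=> j ji; rewrite !mxE (negPf ji) andbF mul0r.
by apply/eqP => /matrixP /(_ 0 i); rewrite !mxE !eqxx /= => /eqP; rewrite oner_eq0.
Qed.

Section Final.
Variables (R : realType) (n k' : nat).
Local Notation m := n.+3.
Local Notation eta := (minkowski R m).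
Local Notation dl i := (delta_mx 0 i : 'rV[R]_m).
Local Notation eps := (@epsm R m).
Local Notation i0 := (@i0 n).
Local Notation toC := (real_complex R).
Hypothesis Hk : (k' <= n.+1)%N.

Lemma eigC_E (A : 'M[R]_m) z :
  eigenvalueC A z = eigenvalue (map_mx toC A) z.
Proof.
rewrite eigenvalue_root_char /eigenvalueC.
have -> : (fun x : R => (x%:C)%C) = toC by [].
by rewrite map_char_poly.
Qed.

Definition sr (r : 'I_k'.+1) : 'I_m := inord (val r).+1.
Lemma sr_val r : val (sr r) = (val r).+1.
Proof. by rewrite /sr /= inordK //; have := ltn_ord r; lia. Qed.
Lemma sr_inj : injective sr.
Proof. by move=> a b /(congr1 val); rewrite !sr_val => -[] /val_inj. Qed.

Definition E0 : 'M[R]_(k'.+1, m) := \matrix_r dl (sr r).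

Lemma E0_ortho : orthonormal_frame E0.
Proof.
split.
  move=> r r' rr'; rewrite gram_entry !rowK gmet_dl (inj_eq sr_inj) (negPf rr') //.
by move=> r; left; rewrite gram_entry !rowK gmet_dl eqxx epsS // sr_val.
Qed.

Lemma bound (T : tensor4 R m) (P0 : {poly R[i]}) : P0 != 0 ->
  (forall E : 'M[R]_(k'.+1, m), orthonormal_frame E ->
     forall z, eigenvalueC (jacobi_plane T E) z -> root P0 z) ->
  exists b, forall E : 'M[R]_(k'.+1, m), orthonormal_frame E ->
  `|\tr (jacobi_plane T E *m jacobi_plane T E)| <= b.
Proof.
move=> P0nz H; have [b Hb] := tr_sq_bound n.+2 P0nz.
exists b => E HE; apply: Hb => z hz; apply: (H E HE).
by rewrite eigC_E eigenvalue_root_char.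
Qed.

Variables (T : tensor4 R m) (c : R).
Hypothesis HTc : forall a b c' d, T a b c' d = c * Gt R a b c' d.

Lemma sr_nz r : val (sr r) != 0%N.
Proof. by rewrite sr_val. Qed.

Lemma A0_entry i l : jacobi_plane T E0 i l =
  if i == l then c * ((k'.+1)%:R - \sum_r (i == sr r)%:R) else 0.
Proof.
rewrite jacobi_planeE.
under eq_bigr => r _ do rewrite rowK gmet_dl eqxx (epsS R (sr_nz r)) mul1r jacobiE eval4_dl HTc.
rewrite /Gt.
have [<-|il] := eqVneq i l.
  rewrite (_ : (k'.+1)%:R = \sum_(r < k'.+1) (1 : R)); last by rewrite sumr_const card_ord.
  rewrite -sumrB mulr_sumr.
  apply eq_bigr => r _; rewrite !etaE !eqxx (epsS R (sr_nz r)).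
  case: (eqVneq i (sr r)) => [e|ne].
    have ei : eps i = 1 by rewrite e (epsS R (sr_nz r)).
    by rewrite ?eqxx ei /=; ring.
  rewrite /= mulr1 mulr0 subr0 -mulrA eps2 mulr1; ring.
apply: big1 => r _; rewrite !etaE (negPf il).
case: (eqVneq i (sr r)) => [e|ne]; last by rewrite /=; ring.
by rewrite -e (negPf il) mul0r mulr0 subrr mulr0 mul0r.
Qed.

Lemma sum_ind (i : 'I_m) : \sum_(r < k'.+1) (i == sr r)%:R = 0 :> R \/
                          \sum_(r < k'.+1) (i == sr r)%:R = 1 :> R.
Proof.
case: (boolP [exists r, i == sr r]) => [/existsP [r0 /eqP e]|].
  right; rewrite (bigD1 r0) //= e eqxx big1 ?addr0 // => r rr0.
  by rewrite (inj_eq sr_inj) eq_sym (negPf rr0).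
rewrite negb_exists => /forallP H; left; apply: big1 => r _.
by rewrite (negPf (H r)).
Qed.

Lemma eig_A0 z : eigenvalueC (jacobi_plane T E0) z ->
  z = ((k'.+1)%:R * c)%:C%C \/ z = ((k')%:R * c)%:C%C.
Proof.
rewrite eigC_E => /eig_offdiag [|l ->].
  by move=> i l il; rewrite mxE A0_entry (negPf il) rmorph0.
rewrite mxE A0_entry eqxx; case: (sum_ind l) => ->.
  by left; rewrite subr0 mulrC.
by right; rewrite -[k'.+1]addn1 natrD addrK mulrC.
Qed.

Lemma eig_A0_top : eigenvalueC (jacobi_plane T E0) ((k'.+1)%:R * c)%:C%C.
Proof.
rewrite eigC_E.
set A := jacobi_plane T E0.
have Hs : \sum_(r < k'.+1) (i0 == sr r)%:R = 0 :> R.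
  apply: big1 => r _.
  have h : i0 != sr r by rewrite -val_eqE sr_val.
  by rewrite (negPf h).
have Ai0 : A i0 i0 = (k'.+1)%:R * c.
  by rewrite /A A0_entry eqxx Hs subr0 mulrC.
have off : forall l, i0 != l -> map_mx toC A i0 l = 0.
  move=> l il; rewrite mxE /A A0_entry (negPf il).
  exact: raddf0.
have := eig_row0 off.
by rewrite mxE Ai0.
Qed.
End Final.

End SubmissionAux.
Import SubmissionAux.

Theorem theorem1p3 (R : realType) (m : nat) (M : Type)
    (Rm : M -> tensor4 R m) (k : nat) :
  (3 <= m)%N -> (1 <= k <= m.-1)%N ->
  (forall P : M, alg_curv (Rm P)) ->
  k_osserman Rm k ->
  constant_sectional_curvature Rm.
Proof.
case: m Rm => [|[|[|n]]] Rm // _.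
case: k => [|k'] // /andP[_ hk] HT Hos.
have Hk : (k' <= n.+1)%N by [].
have Hb : forall P, exists b, forall E : 'M[R]_(k'.+1, n.+3), orthonormal_frame E ->
    `|\tr (jacobi_plane (Rm P) E *m jacobi_plane (Rm P) E)| <= b.
  move=> P; pose A0 := jacobi_plane (Rm P) (E0 R n k').
  apply: (@bound R n k' (Rm P) (char_poly (map_mx (real_complex R) A0))).
    exact: monic_neq0 (char_poly_monic _).
  move=> E HE z hz; rewrite -eigenvalue_root_char -eigC_E.
  by rewrite -(Hos P P E (E0 R n k') HE (E0_ortho R Hk) z).
have HC : forall P a b c d, Rm P a b c d = cc (Rm P) * Gt R a b c d.
  by move=> P; apply: T_const (HT P) Hk (Hb P).
have key : forall P Q, (k'.+1)%:R * cc (Rm P) = (k'.+1)%:R * cc (Rm Q) \/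
                       (k'.+1)%:R * cc (Rm P) = k'%:R * cc (Rm Q).
  move=> P Q; have h := eig_A0_top Hk (HC P).
  rewrite (Hos P Q _ (E0 R n k') (E0_ortho R Hk) (E0_ortho R Hk)) in h.
  by case: (eig_A0 Hk (HC Q) h) => /complexI ->; [left|right].
have Hsame : forall P Q, cc (Rm P) = cc (Rm Q).
  move=> P Q; set x := cc (Rm P); set y := cc (Rm Q).
  have K0 : 0 <= k'%:R :> R by apply: ler0n.
  have eS : (k'.+1)%:R = k'%:R + 1 :> R by rewrite -natr1.
  have p1 : 0 < 2 * k'%:R + 1 :> R by lra.
  have E : (2 * k'%:R + 1) * (x - y) =
      ((k'%:R + 1) * x - k'%:R * y) - ((k'%:R + 1) * y - k'%:R * x) by ring.
  have E2 : (k'%:R + 1) * (x - y) = (k'%:R + 1) * x - (k'%:R + 1) * y by ring.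
  have nz : k'%:R + 1 != 0 :> R by rewrite gt_eqF //; lra.
  have nz2 : 2 * k'%:R + 1 != 0 :> R by rewrite gt_eqF.
  case: (key P Q); rewrite eS -/x -/y => h1.
    by apply/eqP; rewrite -subr_eq0 -(mulrI_eq0 _ (lregP nz)) E2 h1 subrr.
  case: (key Q P); rewrite eS -/x -/y => h2.
    by apply/eqP; rewrite -subr_eq0 -(mulrI_eq0 _ (lregP nz)) E2 h2 subrr.
  apply/eqP; rewrite -subr_eq0 -(mulrI_eq0 _ (lregP nz2)) E h1 h2 !subrr //.
case: (classic (inhabited M)) => [[P0]|noM]; last first.
  by exists 0 => P; case: noM; exists.
exists (cc (Rm P0)) => P x y hpd.
rewrite /sectional_curvature.
have -> : eval4 (Rm P) x y y x = cc (Rm P) * eval4 (@Gt R n.+3) x y y x.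
  rewrite /eval4 mulr_sumr; apply eq_bigr => a _; rewrite mulr_sumr.
  apply eq_bigr => b _; rewrite mulr_sumr; apply eq_bigr => c _; rewrite mulr_sumr.
  by apply eq_bigr => d _; rewrite HC; ring.
rewrite eval4_G (gmetC y x) -expr2 -/(plane_det x y) -mulrA divff // mulr1.
exact: Hsame.
Qed.
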